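(* Let $C$ be the split octonion algebra over $k$, $G_C=\mathrm{Aut}(C)$, $V_C=1_C^\perp$, and let $G_C\times GL_1$ act on $V_C$ by $(\phi,a)\cdot v=a\,\phi(v)$. Let $V_C^{ss}(k)=\{v\in V_C(k):N_C(v)\neq0\}$. Then $v\mapsto N_C(v)k^{\times2}$ induces a bijection $V_C^{ss}(k)/(G_C\times GL_1)(k)\to k^\times/k^{\times2}$; hence these orbits are in bijection with the isomorphism classes of $2$-dimensional composition algebras over $k$.
   Context: $k$ is a field with $\mathrm{char}(k)\neq2$. An octonion algebra is an 8-dimensional unital $k$-algebra with non-degenerate multiplicative quadratic norm $N_C$; it is split if $N_C$ is isotropic (unique up to isomorphism). $1_C^\perp$ is the orthogonal complement of the identity with respect to the bilinear form of $N_C$. *)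

(* Defs.v *)
From HB Require Import structures.
From mathcomp Require Import all_boot all_order all_algebra.
Set Implicit Arguments. Unset Strict Implicit. Unset Printing Implicit Defensive.
Import Order.TTheory GRing.Theory Num.Theory.
Local Open Scope ring_scope.

(* An n-dimensional k-algebra is modelled on the coordinate space 'rV[k]_n
   with a multiplication [mul], a unit [one] and a quadratic norm [N]. *)

Section CompositionAlgebras.
Variable k : fieldType.
Variable n : nat.
Implicit Types (mul : 'rV[k]_n -> 'rV[k]_n -> 'rV[k]_n) (one : 'rV[k]_n)
  (N : 'rV[k]_n -> k).

Definition polar N (x y : 'rV[k]_n) : k := N (x + y) - N x - N y.

Definition is_bilinear_mul mul : Prop :=
  (forall (a : k) x y z, mul (a *: x + y) z = a *: mul x z + mul y z) /\
  (forall (a : k) x y z, mul z (a *: x + y) = a *: mul z x + mul z y).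

Definition is_unit_of mul one : Prop :=
  forall x, mul one x = x /\ mul x one = x.

Definition is_quadratic_form N : Prop :=
  (forall (a : k) x, N (a *: x) = a ^+ 2 * N x) /\
  (forall (a : k) x y z, polar N (a *: x + y) z = a * polar N x z + polar N y z).

Definition nondegenerate N : Prop :=
  forall x, (forall y, polar N x y = 0) -> x = 0.

Definition multiplicative mul N : Prop :=
  forall x y, N (mul x y) = N x * N y.

Definition is_composition_algebra mul one N : Prop :=
  [/\ is_bilinear_mul mul, is_unit_of mul one, is_quadratic_form N,
      nondegenerate N & multiplicative mul N].

Definition isotropic N : Prop := exists x, x != 0 /\ N x = 0.

Definition is_alg_aut mul one (phi : 'rV[k]_n -> 'rV[k]_n) : Prop :=
  [/\ linear phi, bijective phi, phi one = one &
      forall x y, phi (mul x y) = mul (phi x) (phi y)].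

End CompositionAlgebras.

Definition is_octonion_algebra (k : fieldType) mul one (N : 'rV[k]_8 -> k) :=
  is_composition_algebra mul one N.

Definition is_split_octonion_algebra (k : fieldType) mul one (N : 'rV[k]_8 -> k) :=
  is_octonion_algebra mul one N /\ isotropic N.

Definition in_VC (k : fieldType) (one : 'rV[k]_8) (N : 'rV[k]_8 -> k) v :=
  polar N one v = 0.

Definition in_VCss (k : fieldType) (one : 'rV[k]_8) (N : 'rV[k]_8 -> k) v :=
  in_VC one N v /\ N v != 0.

Definition same_orbit (k : fieldType) mul (one : 'rV[k]_8) (v w : 'rV[k]_8) :=
  exists (phi : 'rV[k]_8 -> 'rV[k]_8) (a : k),
    [/\ is_alg_aut mul one phi, a != 0 & w = a *: phi v].

Definition same_sq_class (k : fieldType) (c d : k) :=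
  exists t : k, t != 0 /\ c = t ^+ 2 * d.

Record alg2 (k : fieldType) := Alg2 {
  a2_mul : 'rV[k]_2 -> 'rV[k]_2 -> 'rV[k]_2;
  a2_one : 'rV[k]_2;
  a2_N : 'rV[k]_2 -> k }.

Definition is_comp_alg2 (k : fieldType) (A : alg2 k) :=
  is_composition_algebra (a2_mul A) (a2_one A) (a2_N A).

Definition alg2_iso (k : fieldType) (A B : alg2 k) :=
  exists f : 'rV[k]_2 -> 'rV[k]_2,
    [/\ linear f, bijective f, f (a2_one A) = a2_one B &
        forall x y, f (a2_mul A x y) = a2_mul B (f x) (f y)].

(* Main.v *)
Require Import Defs.
From HB Require Import structures.
From mathcomp Require Import all_boot all_order all_algebra.
From Stdlib Require Import Classical ClassicalEpsilon.
From mathcomp Require Import ring.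
Import Order.TTheory GRing.Theory Num.Theory.
Local Open Scope ring_scope.

Module Helpers.
Set Implicit Arguments. Unset Strict Implicit. Unset Printing Implicit Defensive.

Section LA.
Variable k : fieldType.

Definition lin (U W : lmodType k) (f : U -> W) :=
  forall r x y, f (r *: x + y) = r *: f x + f y.

Lemma lin0 (U W : lmodType k) (f : U -> W) : lin f -> f 0 = 0.
Proof.
move=> hf; have := hf 1 0 0; rewrite !scale1r addr0 => h.
by apply: (addrI (f 0)); rewrite addr0 -h.
Qed.

Lemma linD (U W : lmodType k) (f : U -> W) : lin f -> forall x y, f (x + y) = f x + f y.
Proof. by move=> hf x y; have := hf 1 x y; rewrite !scale1r. Qed.

Lemma linZ (U W : lmodType k) (f : U -> W) : lin f -> forall r x, f (r *: x) = r *: f x.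
Proof. by move=> hf r x; rewrite -(addr0 (r *: x)) hf lin0 // addr0. Qed.

Lemma linN (U W : lmodType k) (f : U -> W) : lin f -> forall x, f (- x) = - f x.
Proof. by move=> hf x; rewrite -scaleN1r linZ // scaleN1r. Qed.

Lemma linB (U W : lmodType k) (f : U -> W) : lin f -> forall x y, f (x - y) = f x - f y.
Proof. by move=> hf x y; rewrite linD // linN. Qed.

Lemma lin_sum (U W : lmodType k) (f : U -> W) m (g : 'I_m -> U) :
  lin f -> f (\sum_i g i) = \sum_i f (g i).
Proof.
move=> hf; elim/big_rec2: _ => [|i y1 y2 _ <-]; first exact: lin0.
exact: linD.
Qed.

Lemma inj_bij n (f : 'rV[k]_n -> 'rV[k]_n) :
  lin f -> injective f -> exists g, cancel f g /\ cancel g f.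
Proof.
move=> hf finj.
pose M := \matrix_(i < n) f 'e_i.
have fM x : f x = x *m M.
  rewrite {1}(row_sum_delta x) lin_sum // mulmx_sum_row.
  by apply: eq_bigr => i _; rewrite linZ // rowK.
have Mu : M \in unitmx.
  rewrite -row_free_unit -kermx_eq0; apply/eqP/row_matrixP => i.
  rewrite row0; apply: finj; rewrite fM lin0 //.
  by apply/sub_kermxP; exact: row_sub.
exists (fun y => y *m invmx M); split => x.
  by rewrite fM mulmxK.
by rewrite fM mulmxKV.
Qed.

Lemma notspan m n (e : 'I_m -> 'rV[k]_n) : (m < n)%N ->
  exists z, forall c : 'I_m -> k, z != \sum_i c i *: e i.
Proof.
move=> mn; apply: NNPP => H.
have H' z : exists c : 'I_m -> k, z = \sum_i c i *: e i.
  apply: NNPP => H2; apply: H; exists z => c; apply/eqP => E; apply: H2; by exists c.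
pose M := \matrix_(i < m) e i.
have : (1%:M <= M)%MS.
  apply/row_subP => j; have [c ->] := H' (row j 1%:M).
  have -> : \sum_i c i *: e i = (\row_i c i) *m M.
    by rewrite mulmx_sum_row; apply: eq_bigr => i _; rewrite rowK mxE.
  exact: submxMl.
move/mxrankS; rewrite mxrank1 => h.
have := leq_trans h (rank_leq_row M).
by rewrite leqNgt mn.
Qed.

Lemma dep m n (F : 'I_m -> 'rV[k]_n) : (n < m)%N ->
  exists c : 'I_m -> k, (exists i, c i != 0) /\ \sum_i c i *: F i = 0.
Proof.
move=> nm; pose M := \matrix_i F i.
have nrf : ~~ row_free M.
  by rewrite /row_free neq_ltn (leq_ltn_trans (rank_leq_col M) nm).
have K0 : kermx M != 0 by rewrite kermx_eq0.
have [i ri] : exists i, row i (kermx M) != 0.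
  apply: NNPP => H; move/eqP: K0; apply; apply/row_matrixP => i; rewrite row0.
  by apply/eqP; apply: NNPP => H2; apply: H; exists i; apply/negP.
exists (fun j => row i (kermx M) 0 j); split.
  apply: NNPP => H; move/eqP: ri; apply; apply/rowP => j; rewrite [in RHS]mxE.
  by apply/eqP; apply: NNPP => H2; apply: H; exists j; apply/negP.
have : row i (kermx M) *m M = 0 by apply/sub_kermxP; exact: row_sub.
rewrite mulmx_sum_row => h; rewrite -[RHS]h.
by apply: eq_bigr => j _; rewrite rowK.
Qed.

Lemma span m n (F : 'I_m -> 'rV[k]_n) : (n <= m)%N ->
  (forall c : 'I_m -> k, \sum_i c i *: F i = 0 -> forall i, c i = 0) ->
  forall z, exists c : 'I_m -> k, z = \sum_i c i *: F i.
Proof.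
move=> nm indep z.
pose G (i : 'I_(m + 1)) := match split i with inl j => F j | inr _ => z end.
have nm1 : (n < m + 1)%N by rewrite addn1 ltnS.
have [c [[i ci] H]] := dep G nm1.
have e1 j : split (lshift 1 j : 'I_(m + 1)) = inl j := unsplitK (inl j).
have e2 j : split (rshift m j : 'I_(m + 1)) = inr j := unsplitK (inr j).
have {}H : \sum_j c (lshift 1 j) *: F j + c (rshift m ord0) *: z = 0.
  rewrite -[RHS]H big_split_ord /= big_ord1; congr (_ + _).
    by apply: eq_bigr => j _; rewrite /G e1.
  by rewrite /G e2.
have [d0|dn] := eqVneq (c (rshift m ord0)) 0.
  move: H; rewrite d0 scale0r addr0 => /indep H.
  move: ci; rewrite -(splitK i); case: (split i) => [j|j]; first by rewrite /= H eqxx.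
  by rewrite /= (ord1 j) d0 eqxx.
exists (fun j => - c (lshift 1 j) / c (rshift m ord0)).
apply: (scalerI dn); rewrite scaler_sumr.
have -> : c (rshift m ord0) *: z = - \sum_(j < m) c (lshift 1 j) *: F j.
  by apply/eqP; rewrite -addr_eq0 addrC H.
rewrite -sumrN; apply: eq_bigr => j _; rewrite scalerA mulrC -mulrA mulVf // mulr1.
by rewrite scaleNr.
Qed.

End LA.

Lemma AC4a (M : zmodType) (a b c d : M) : a + b + (c + d) = a + c + (d + b).
Proof. by rewrite addrACA (addrC b). Qed.
Lemma AC4b (M : zmodType) (a b c d : M) : a + b + (c + d) = a + d + (c + b).
Proof. by rewrite -!addrA; congr (a + _); rewrite addrC -addrA addrC -!addrA (addrC b). Qed.
Lemma use_eq (M : zmodType) (a b c d : M) : c = d -> a - b = c - d -> a = b.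
Proof. by move=> -> /eqP; rewrite subrr subr_eq0 => /eqP. Qed.

Section CD.
Variable k : fieldType.
Definition cdm (A : lmodType k) (mA : A -> A -> A) (cA : A -> A) (g : k) (P Q : A * A) : A * A :=
  (mA P.1 Q.1 + g *: mA (cA Q.2) P.2, mA Q.2 P.1 + mA P.2 (cA Q.1)).
Definition cdc (A : lmodType k) (cA : A -> A) (P : A * A) : A * A := (cA P.1, - P.2).
Definition cdp (A : lmodType k) (pA : A -> A -> k) (g : k) (P Q : A * A) : k :=
  pA P.1 Q.1 + g * pA P.2 Q.2.
Definition mA0 (x y : k^o) : k^o := x * y.
Definition cA0 (x : k^o) : k^o := x.
Definition pA0 (x y : k^o) : k := 2 * (x * y).
Definition M1 c := cdm mA0 cA0 (- c).
Definition C1 := cdc cA0.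
Definition P1 c := cdp pA0 c.
Definition M2 c al := cdm (M1 c) C1 (- al).
Definition C2 := cdc C1.
Definition P2 c al := cdp (P1 c) al.
Definition M3 c al be := cdm (M2 c al) C2 (- be).
Definition C3 := cdc C2.
Definition P3 c al be := cdp (P2 c al) be.

Definition bas1 (i : 'I_2) : k^o * k^o := nth 0 [:: (1, 0); (0, 1)] i.
Definition bas2 (i : 'I_4) : (k^o * k^o) * (k^o * k^o) :=
  nth 0 [:: ((1, 0), (0, 0)); ((0, 1), (0, 0)); ((0, 0), (1, 0)); ((0, 0), (0, 1))] i.
Definition bas3 (i : 'I_8) : ((k^o * k^o) * (k^o * k^o)) * ((k^o * k^o) * (k^o * k^o)) :=
  nth 0 [:: (((1, 0), (0, 0)), 0); (((0, 1), (0, 0)), 0); (((0, 0), (1, 0)), 0);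
            (((0, 0), (0, 1)), 0); (0, ((1, 0), (0, 0))); (0, ((0, 1), (0, 0)));
            (0, ((0, 0), (1, 0))); (0, ((0, 0), (0, 1)))] i.

Lemma P1_bas c (i j : 'I_2) : i != j -> P1 c (bas1 i) (bas1 j) = 0.
Proof.
case: i => [[|[|i]] Hi] //; case: j => [[|[|j]] Hj] //= _;
  rewrite /P1 /cdp /pA0 /=; ring.
Qed.

Lemma P1_basd c (i : 'I_2) : (2:k) != 0 -> c != 0 -> P1 c (bas1 i) (bas1 i) != 0.
Proof.
move=> h2 hc; have -> : P1 c (bas1 i) (bas1 i) = 2 * nth 1 [:: 1; c] i.
  case: i => [[|[|i]] Hi] //=; rewrite /P1 /cdp /pA0 /=; ring.
rewrite mulf_neq0 //; case: i => [[|[|i]] Hi] //=; exact: oner_neq0.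
Qed.

Lemma P2_bas c al (i j : 'I_4) : i != j -> P2 c al (bas2 i) (bas2 j) = 0.
Proof.
case: i => [[|[|[|[|i]]]] Hi] //; case: j => [[|[|[|[|j]]]] Hj] //= _;
  rewrite /P2 /P1 /cdp /pA0 /=; ring.
Qed.

Lemma P2_basd c al (i : 'I_4) : (2:k) != 0 -> c != 0 -> al != 0 ->
  P2 c al (bas2 i) (bas2 i) != 0.
Proof.
move=> h2 hc ha; have -> : P2 c al (bas2 i) (bas2 i) = 2 * nth 1 [:: 1; c; al; al * c] i.
  case: i => [[|[|[|[|i]]]] Hi] //=; rewrite /P2 /P1 /cdp /pA0 /=; ring.
rewrite mulf_neq0 //; case: i => [[|[|[|[|i]]]] Hi] //=; rewrite ?oner_neq0 ?mulf_neq0 //.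
Qed.

Lemma P3_bas c al be (i j : 'I_8) : i != j -> P3 c al be (bas3 i) (bas3 j) = 0.
Proof.
case: i => [[|[|[|[|[|[|[|[|i]]]]]]]] Hi] //; case: j => [[|[|[|[|[|[|[|[|j]]]]]]]] Hj] //= _;
  rewrite /P3 /P2 /P1 /cdp /pA0 /=; ring.
Qed.

Definition d3 (c al be : k) (i : 'I_8) : k :=
  nth 1 [:: 1; c; al; al * c; be; be * c; be * al; be * (al * c)] i.

Lemma P3_basd c al be (i : 'I_8) : P3 c al be (bas3 i) (bas3 i) = 2 * d3 c al be i.
Proof.
case: i => [[|[|[|[|[|[|[|[|i]]]]]]]] Hi] //=;
  rewrite /d3 /P3 /P2 /P1 /cdp /pA0 /=; ring.
Qed.

Lemma d3_neq0 c al be (i : 'I_8) : c != 0 -> al != 0 -> be != 0 -> d3 c al be i != 0.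
Proof.
move=> hc ha hb; case: i => [[|[|[|[|[|[|[|[|i]]]]]]]] Hi] //=;
  rewrite /d3 /= ?oner_eq0 ?mulf_neq0 //.
Qed.
End CD.
Arguments bas1 {k}. Arguments bas2 {k}. Arguments bas3 {k}.

Section Comp.
Variables (k : fieldType) (n : nat).
Local Notation V := 'rV[k]_n.
Variables (mul : V -> V -> V) (one : V) (N : V -> k).
Hypothesis h2 : (2:k) != 0.
Hypothesis hn : (0 < n)%N.
Hypothesis hC : is_composition_algebra mul one N.

Local Notation "x ** y" := (mul x y) (at level 40, left associativity).
Local Notation B := (polar N).

Lemma mulDZl a x y z : (a *: x + y) ** z = a *: (x ** z) + y ** z.
Proof. by case: hC => [[]]. Qed.
Lemma mulDZr a x y z : z ** (a *: x + y) = a *: (z ** x) + z ** y.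
Proof. by case: hC => [[]]. Qed.
Lemma mul1x x : one ** x = x. Proof. by case: hC => _ /(_ x) [u1 u2]. Qed.
Lemma mulx1 x : x ** one = x. Proof. by case: hC => _ /(_ x) [u1 u2]. Qed.
Lemma NZ a x : N (a *: x) = a ^+ 2 * N x. Proof. by case: hC => _ _ []. Qed.
Lemma polDZ a x y z : B (a *: x + y) z = a * B x z + B y z.
Proof. by case: hC => _ _ []. Qed.
Lemma ndeg x : (forall y, B x y = 0) -> x = 0. Proof. by case: hC => _ _ _ /(_ x). Qed.
Lemma Nmul x y : N (x ** y) = N x * N y. Proof. by case: hC. Qed.

Lemma mulllin z : lin (fun x => x ** z). Proof. by move=> a x y; rewrite mulDZl. Qed.
Lemma mulrlin z : lin (fun x => z ** x). Proof. by move=> a x y; rewrite mulDZr. Qed.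

Lemma mul0x x : 0 ** x = 0. Proof. exact: (lin0 (mulllin x)). Qed.
Lemma mulx0 x : x ** 0 = 0. Proof. exact: (lin0 (mulrlin x)). Qed.
Lemma mulDl x y z : (x + y) ** z = x ** z + y ** z. Proof. exact: (linD (mulllin z)). Qed.
Lemma mulDr x y z : z ** (x + y) = z ** x + z ** y. Proof. exact: (linD (mulrlin z)). Qed.
Lemma mulZl a x z : (a *: x) ** z = a *: (x ** z). Proof. exact: (linZ (mulllin z)). Qed.
Lemma mulZr a x z : z ** (a *: x) = a *: (z ** x). Proof. exact: (linZ (mulrlin z)). Qed.
Lemma mulNl x z : (- x) ** z = - (x ** z). Proof. exact: (linN (mulllin z)). Qed.
Lemma mulNr x z : z ** (- x) = - (z ** x). Proof. exact: (linN (mulrlin z)). Qed.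
Lemma mulBl x y z : (x - y) ** z = x ** z - y ** z. Proof. exact: (linB (mulllin z)). Qed.
Lemma mulBr x y z : z ** (x - y) = z ** x - z ** y. Proof. exact: (linB (mulrlin z)). Qed.

Lemma N0 : N 0 = 0. Proof. by rewrite -(scale0r 0) NZ expr0n mul0r. Qed.
Lemma polarC x y : B x y = B y x.
Proof. rewrite /polar (addrC x y); ring. Qed.
Lemma pollin z : lin (U:=V) (W:=k^o) (fun x => B x z) .
Proof. move=> a x y; by rewrite polDZ. Qed.
Lemma polDl x y z : B (x + y) z = B x z + B y z. Proof. exact: (linD (pollin z)). Qed.
Lemma polZl a x z : B (a *: x) z = a * B x z. Proof. exact: (linZ (pollin z)). Qed.
Lemma pol0l z : B 0 z = 0. Proof. exact: (lin0 (pollin z)). Qed.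
Lemma polNl x z : B (- x) z = - B x z. Proof. exact: (linN (pollin z)). Qed.
Lemma polBl x y z : B (x - y) z = B x z - B y z. Proof. exact: (linB (pollin z)). Qed.
Lemma polDr x y z : B z (x + y) = B z x + B z y. Proof. by rewrite !(polarC z) polDl. Qed.
Lemma polZr a x z : B z (a *: x) = a * B z x. Proof. by rewrite !(polarC z) polZl. Qed.
Lemma pol0r z : B z 0 = 0. Proof. by rewrite polarC pol0l. Qed.
Lemma polNr x z : B z (- x) = - B z x. Proof. by rewrite !(polarC z) polNl. Qed.
Lemma polBr x y z : B z (x - y) = B z x - B z y. Proof. by rewrite !(polarC z) polBl. Qed.
Lemma ND x y : N (x + y) = N x + N y + B x y.
Proof. by rewrite /polar; ring. Qed.
Lemma polxx x : B x x = 2 * N x.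
Proof.
rewrite /polar -{1 2}(scale1r x) -scalerDl NZ; ring.
Qed.
Lemma NN x : N (- x) = N x. Proof. by rewrite -scaleN1r NZ; ring. Qed.

Lemma exists_nz : exists x : V, x != 0.
Proof.
exists ('e_(Ordinal hn)); apply/eqP => /rowP /(_ (Ordinal hn)).
rewrite !mxE eqxx /= => /eqP; by rewrite oner_eq0.
Qed.

Lemma None : N one = 1.
Proof.
have h : N one = N one * N one by rewrite -Nmul mul1x.
have [/eqP h0|] := boolP (N one == 0).
  have [x /eqP xn] := exists_nz; apply: False_ind; apply: xn.
  apply: ndeg => y.
  have Nz z : N z = 0 by rewrite -(mul1x z) Nmul h0 mul0r.
  by rewrite /polar !Nz; ring.
move=> nz; apply: (mulfI nz); by rewrite mulr1 -h.
Qed.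


Lemma pol_mulxx x y z : B (x ** y) (x ** z) = N x * B y z.
Proof.
have := Nmul x (y + z); rewrite mulDr !ND !Nmul => h.
have : N x * N y + N x * N z + B (x ** y) (x ** z) = N x * N y + N x * N z + N x * B y z.
  by rewrite h; ring.
by move/addrI.
Qed.

Lemma lin3 x y w z : B (x ** y) (w ** z) + B (x ** z) (w ** y) = B x w * B y z.
Proof.
have := pol_mulxx (x + w) y z; rewrite !mulDl !polDl !polDr !pol_mulxx ND => h.
have : N x * B y z + N w * B y z + (B (x ** y) (w ** z) + B (x ** z) (w ** y))
     = N x * B y z + N w * B y z + B x w * B y z.
  transitivity ((N x + N w + B x w) * B y z); last ring.
  rewrite -h (polarC (x ** z)); ring.
by move/addrI.
Qed.

Lemma pol_mulxxr x y z : B (x ** z) (y ** z) = B x y * N z.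
Proof.
have := lin3 x z y z; rewrite polxx => h.
apply: (mulfI h2); rewrite mulr2n mulrDl !mul1r h; ring.
Qed.

Definition T x := B x one.
Definition conj x := T x *: one - x.

Lemma Tone : T one = 2. Proof. by rewrite /T polxx None mulr1. Qed.

Lemma adj1 x y z : B (x ** y) z = B y (conj x ** z).
Proof.
have := lin3 x y one z; rewrite !mul1x => h.
rewrite /conj mulBl mulZl mul1x polBr polZr /T (polarC y (x ** z)) -h; ring.
Qed.

Lemma adj2 x y z : B (x ** y) z = B x (z ** conj y).
Proof.
have := lin3 x y z one; rewrite !mulx1 => h.
rewrite /conj mulBr mulZr mulx1 polBr polZr /T mulrC -h; ring.
Qed.

Lemma Tconj x : T (conj x) = T x.
Proof. by rewrite /T /conj polBl polZl -/(T one) Tone -/(T x); ring. Qed.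

Lemma conjK x : conj (conj x) = x.
Proof. by rewrite {1}/conj Tconj /conj opprB addrC subrK. Qed.

Lemma conjlin : lin conj.
Proof.
move=> a x y; rewrite /conj /T polDl polZl scalerDl -scalerA scalerBr.
by rewrite opprD !addrA; congr (_ + _); rewrite -!addrA; congr (_ + _); rewrite addrC.
Qed.

Lemma conjD x y : conj (x + y) = conj x + conj y. Proof. exact: (linD conjlin). Qed.
Lemma conjZ a x : conj (a *: x) = a *: conj x. Proof. exact: (linZ conjlin). Qed.
Lemma conjN x : conj (- x) = - conj x. Proof. exact: (linN conjlin). Qed.
Lemma conjone : conj one = one.
Proof. by rewrite /conj Tone scaler_nat mulr2n addrK. Qed.

Lemma pol_conj x y : B (conj x) y = B x (conj y).
Proof.
rewrite /conj polBl polBr polZl polZr -/(T y) -/(T x) (polarC one) -/(T y); ring.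
Qed.

Lemma eq_pol x y : (forall z, B x z = B y z) -> x = y.
Proof.
move=> h; apply/eqP; rewrite -subr_eq0; apply/eqP/ndeg => z.
by rewrite polBl h subrr.
Qed.

Lemma mulK1 x y : conj x ** (x ** y) = N x *: y.
Proof.
apply: eq_pol => z; by rewrite adj1 conjK pol_mulxx polZl.
Qed.

Lemma mulK2 x y : (y ** x) ** conj x = N x *: y.
Proof.
apply: eq_pol => z; by rewrite adj2 conjK pol_mulxxr polZl mulrC.
Qed.

Lemma mul_conjr x : x ** conj x = N x *: one.
Proof. by rewrite -mulK2 mul1x. Qed.
Lemma mul_conjl x : conj x ** x = N x *: one.
Proof. by rewrite -mulK1 mulx1. Qed.

Lemma lin_conj x y : x ** conj y + y ** conj x = B x y *: one.
Proof.
have := mul_conjr (x + y); rewrite conjD mulDl (mulDr _ _ x) (mulDr _ _ y) !mul_conjr ND !scalerDl => h.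
apply: (addrI (N x *: one + N y *: one)); rewrite -[in RHS]h.
exact: AC4a.
Qed.

Lemma lin_K1 u w y : conj u ** (w ** y) + conj w ** (u ** y) = B u w *: y.
Proof.
have := mulK1 (u + w) y; rewrite conjD (mulDl u w y) (mulDr _ _ (conj u + conj w)) !(mulDl (conj u) (conj w)) !mulK1 ND !scalerDl => h.
apply: (addrI (N u *: y + N w *: y)); rewrite -[in RHS]h.
exact: AC4b.
Qed.

Lemma conj_mul x y : conj (x ** y) = conj y ** conj x.
Proof.
apply: eq_pol => z.
rewrite pol_conj adj1 [RHS]adj1 conjK (polarC (conj x)) adj2.
done.
Qed.

Lemma conjT0 z : T z = 0 -> conj z = - z.
Proof. by rewrite /conj => ->; rewrite scale0r add0r. Qed.

Lemma sqr x : x ** x = T x *: x - N x *: one.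
Proof.
have := mul_conjr x; rewrite /conj mulBr mulZr mulx1 => <-.
by rewrite opprB addrC subrK.
Qed.

Lemma TB x a : T a = 0 -> B (conj x) a = - B x a.
Proof. by move=> Ta; rewrite pol_conj conjT0 // polNr. Qed.

Lemma cdA x a : T a = 0 -> B x a = 0 -> x ** a = a ** conj x.
Proof.
move=> Ta Hxa; have := lin_conj x a.
rewrite conjT0 // mulNr Hxa scale0r => /eqP.
by rewrite addrC subr_eq0 => /eqP ->.
Qed.

Lemma cdA' x a : T a = 0 -> B x a = 0 -> a ** x = conj x ** a.
Proof.
move=> Ta Hxa; rewrite -{1}(conjK x) -cdA //.
by rewrite TB // Hxa oppr0.
Qed.

Lemma cdB x y a : T a = 0 -> B x a = 0 -> B y a = 0 -> B (y ** x) a = 0 ->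
  x ** (y ** a) = (y ** x) ** a.
Proof.
move=> Ta Hx Hy Hyx.
have := lin_K1 (conj x) a (conj y).
rewrite conjK (conjT0 Ta) TB // Hx oppr0 scale0r -cdA // mulNl.
rewrite (cdA' (x:=conj x ** conj y)) //; last by rewrite -conj_mul TB // Hyx oppr0.
by rewrite -conj_mul conjK => /eqP; rewrite subr_eq0 => /eqP.
Qed.

Lemma cdC x y a : T a = 0 -> B x a = 0 -> B y a = 0 -> B (x ** conj y) a = 0 ->
  (x ** a) ** y = (x ** conj y) ** a.
Proof.
move=> Ta Hx Hy Hxy.
rewrite -(conjK ((x ** a) ** y)) -(conjK ((x ** conj y) ** a)); congr conj.
rewrite !conj_mul (conjT0 Ta) mulNl -cdA // mulNr.
rewrite cdB //; last by rewrite TB // Hy oppr0.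
by rewrite -(conj_mul x (conj y)) mulNl -(cdA (x:=x ** conj y)).
Qed.

Lemma cdD x y a : T a = 0 -> B x a = 0 -> B (conj x ** y) a = 0 ->
  (x ** a) ** (y ** a) = - N a *: (conj y ** x).
Proof.
move=> Ta Hx Hxy; apply: eq_pol => z.
have Txa : T (x ** a) = 0 by rewrite /T adj1 mulx1 polarC TB // Hx oppr0.
rewrite adj1 conjT0 // mulNl polNr.
have := lin3 y a (x ** a) z.
have -> : B y (x ** a) = 0 by rewrite polarC adj1 polarC.
rewrite mul0r.
have -> : (x ** a) ** a = - (N a *: x) by rewrite -mulK2 (conjT0 Ta) mulNr opprK.
rewrite polNr polZr adj1 => /eqP; rewrite subr_eq0 => /eqP ->.
by rewrite polZl (adj1 (conj y)) conjK (polarC x); ring.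
Qed.

Definition level (A : lmodType k) (mA : A -> A -> A) (cA : A -> A) (pA : A -> A -> k)
  (oA : A) (e : A -> V) :=
  [/\ lin e, (forall p q, e (mA p q) = e p ** e q), (forall p, e (cA p) = conj (e p)),
      (forall p q, B (e p) (e q) = pA p q) & e oA = one].

Definition cde (A : lmodType k) (e : A -> V) (a : V) (P : A * A) : V := e P.1 + e P.2 ** a.

Lemma level_step (A : lmodType k) mA cA pA (oA : A) e a :
  level mA cA pA oA e -> (forall p, B (e p) a = 0) ->
  level (cdm mA cA (- N a)) (cdc cA) (cdp pA (N a)) (oA, 0) (cde e a).
Proof.
move=> [el em ec ep eo] Ha.
have Ta : T a = 0 by rewrite /T polarC -eo Ha.
have orth p q : B (e p ** a) (e q) = 0.
  by rewrite adj1 -ec -em polarC Ha.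
split.
- move=> r [P1 P2] [Q1 Q2]; rewrite /cde /=.
  rewrite !el mulDl mulZl; apply/rowP => i; rewrite !mxE; ring.
- move=> [P1 P2] [Q1 Q2]; rewrite /cde /=.
  rewrite mulDl !mulDr.
  rewrite (cdB (x:=e P1) (y:=e Q2)) // -?em //.
  rewrite (cdC (x:=e P2) (y:=e Q1)) // -?ec -?em //.
  rewrite (cdD (x:=e P2) (y:=e Q2)) // -?ec -?em //.
  rewrite !(linD el) (linZ el) !em ec (mulDl _ _ a).
  apply/rowP => i; rewrite !mxE; ring.
- move=> [P1 P2]; rewrite /cde /= (linN el) mulNl ec conjD (conjT0 (z:=e P2 ** a)) //.
  by rewrite /T -eo orth.
- move=> [P1 P2] [Q1 Q2]; rewrite /cde /cdp /= !polDl !polDr ep orth.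
  rewrite polarC orth pol_mulxxr ep; ring.
- by rewrite /cde /= eo (lin0 el) mul0x addr0.
Qed.

Definition e0 (x : k^o) : V := x *: one.

Lemma level0 : level (@mA0 k) (@cA0 k) (@pA0 k) 1 e0.
Proof.
split.
- by move=> r x y; rewrite /e0 scalerDl scalerA.
- by move=> x y; rewrite /e0 /mA0 mulZl mulZr mul1x scalerA mulrC.
- by move=> x; rewrite /e0 /cA0 conjZ conjone.
- by move=> x y; rewrite /e0 /pA0 polZl polZr polxx None; ring.
- by rewrite /e0 scale1r.
Qed.

Definition E1 v := cde e0 v.
Definition E2 v a := cde (E1 v) a.
Definition E3 v a b := cde (E2 v a) b.

Lemma E1E v P : E1 v P = P.1 *: one + P.2 *: v.
Proof. by rewrite /E1 /cde /e0 mulZl mul1x. Qed.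

Lemma E2E v a P : E2 v a P = P.1.1 *: one + P.1.2 *: v + P.2.1 *: a + P.2.2 *: (v ** a).
Proof. by rewrite /E2 /cde -!/(E1 v _) !E1E mulDl !mulZl mul1x addrA. Qed.

Definition frame v a b :=
  [/\ T v = 0, T a = 0, B v a = 0 & [/\ T b = 0, B v b = 0, B a b = 0 & B (v ** a) b = 0]].

Lemma level1 v : T v = 0 -> level (M1 (N v)) (@C1 k) (P1 (N v)) (1, 0) (E1 v).
Proof.
move=> Tv; apply: level_step; first exact: level0.
by move=> p; rewrite /e0 polZl polarC -/(T v) Tv mulr0.
Qed.

Lemma level2 v a : T v = 0 -> T a = 0 -> B v a = 0 ->
  level (M2 (N v) (N a)) (@C2 k) (P2 (N v) (N a)) ((1, 0), 0) (E2 v a).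
Proof.
move=> Tv Ta Bva; apply: level_step; first exact: level1.
by move=> p; rewrite E1E polDl !polZl polarC -/(T a) Ta Bva; ring.
Qed.

Lemma level3 v a b : frame v a b ->
  level (M3 (N v) (N a) (N b)) (@C3 k) (P3 (N v) (N a) (N b)) (((1, 0), 0), 0) (E3 v a b).
Proof.
move=> [Tv Ta Bva [Tb Bvb Bab Bvab]]; apply: level_step; first exact: level2.
move=> p; rewrite E2E !polDl !polZl polarC -/(T b) Tb Bvb Bab Bvab; ring.
Qed.

Lemma E3_inj0 v a b : frame v a b -> N v != 0 -> N a != 0 -> N b != 0 ->
  forall P, E3 v a b P = 0 -> P = 0.
Proof.
move=> fr nv na nb P E0.
have [_ _ _ ep _] := level3 fr.
have H Q : P3 (N v) (N a) (N b) P Q = 0 by rewrite -ep E0 pol0l.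
move: P {E0} H => [[[x0 x1] [x2 x3]] [[x4 x5] [x6 x7]]] H.
have nz (c : k) (x : k^o) : c != 0 -> c * x = 0 -> x = 0.
  by move=> cn /eqP; rewrite mulf_eq0 (negbTE cn) /= => /eqP.
have h0 : 2 * x0 = 0.
  by rewrite -[RHS](H (((1, 0), (0, 0)), ((0, 0), (0, 0)))) /P3 /P2 /P1 /cdp /pA0 /=; ring.
have h1 : (2 * N v) * x1 = 0.
  by rewrite -[RHS](H (((0, 1), (0, 0)), ((0, 0), (0, 0)))) /P3 /P2 /P1 /cdp /pA0 /=; ring.
have h2' : (2 * N a) * x2 = 0.
  by rewrite -[RHS](H (((0, 0), (1, 0)), ((0, 0), (0, 0)))) /P3 /P2 /P1 /cdp /pA0 /=; ring.
have h3 : (2 * N a * N v) * x3 = 0.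
  by rewrite -[RHS](H (((0, 0), (0, 1)), ((0, 0), (0, 0)))) /P3 /P2 /P1 /cdp /pA0 /=; ring.
have h4 : (2 * N b) * x4 = 0.
  by rewrite -[RHS](H (((0, 0), (0, 0)), ((1, 0), (0, 0)))) /P3 /P2 /P1 /cdp /pA0 /=; ring.
have h5 : (2 * N b * N v) * x5 = 0.
  by rewrite -[RHS](H (((0, 0), (0, 0)), ((0, 1), (0, 0)))) /P3 /P2 /P1 /cdp /pA0 /=; ring.
have h6 : (2 * N b * N a) * x6 = 0.
  by rewrite -[RHS](H (((0, 0), (0, 0)), ((0, 0), (1, 0)))) /P3 /P2 /P1 /cdp /pA0 /=; ring.
have h7 : (2 * N b * N a * N v) * x7 = 0.
  by rewrite -[RHS](H (((0, 0), (0, 0)), ((0, 0), (0, 1)))) /P3 /P2 /P1 /cdp /pA0 /=; ring.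
rewrite (nz _ _ h2 h0) (nz _ _ _ h1) ?(nz _ _ _ h2') ?(nz _ _ _ h3) ?(nz _ _ _ h4)
  ?(nz _ _ _ h5) ?(nz _ _ _ h6) ?(nz _ _ _ h7) // ?mulf_neq0 //.
Qed.

Definition orthfam m (F : 'I_m -> V) :=
  (forall i j, i != j -> B (F i) (F j) = 0) /\ (forall i, N (F i) != 0).

Lemma pol_suml m (g : 'I_m -> V) z : B (\sum_i g i) z = \sum_i B (g i) z.
Proof. exact: (lin_sum _ (pollin z)). Qed.

Lemma orth_coef m (F : 'I_m -> V) (c : 'I_m -> k) j : orthfam F ->
  B (\sum_i c i *: F i) (F j) = c j * B (F j) (F j).
Proof.
move=> [o _]; rewrite pol_suml (bigD1 j) //= big1 ?addr0 ?polZl //.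
by move=> i ij; rewrite polZl o ?mulr0.
Qed.

Lemma orth_indep m (F : 'I_m -> V) : orthfam F ->
  forall c : 'I_m -> k, \sum_i c i *: F i = 0 -> forall i, c i = 0.
Proof.
move=> oF c H i; have := orth_coef c i oF; rewrite H pol0l polxx.
move/esym/eqP; rewrite !mulf_eq0 (negbTE h2) (negbTE (oF.2 i)) /= orbF.
by move/eqP.
Qed.

Lemma D1 m (F : 'I_m -> V) : (m < n)%N -> orthfam F ->
  exists z, (forall i, B (F i) z = 0) /\ N z != 0.
Proof.
move=> mn oF; pose cf z i := B z (F i) / B (F i) (F i).
pose pr z := z - \sum_i cf z i *: F i.
have prO z j : B (F j) (pr z) = 0.
  rewrite polarC polBl orth_coef // /cf -mulrA mulVf ?mulr1 ?subrr //.
  by rewrite polxx mulf_neq0 // oF.2.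
apply: NNPP => H.
have H' z : (forall i, B (F i) z = 0) -> N z = 0.
  move=> h; apply: NNPP => nz; apply: H; exists z; split => //; exact/eqP.
have pr0 z : pr z = 0.
  apply: ndeg => y.
  have -> : y = pr y + \sum_i cf y i *: F i by rewrite /pr subrK.
  rewrite polDr (polarC (pr z) (\sum_i cf y i *: F i)) pol_suml big1; last first.
    by move=> i _; rewrite polZl prO mulr0.
  rewrite addr0 /polar !H' ?subrr // => i; rewrite ?prO //.
  by rewrite polDr !prO addr0.
have [z nz] := notspan F mn.
by move: (nz (cf z)); rewrite -subr_eq0 -/(pr z) pr0 eqxx.
Qed.

Lemma level_orth (A : lmodType k) mA cA pA (oA : A) e m (bs : 'I_m -> A) :
  level mA cA pA oA e -> (forall i j, i != j -> pA (bs i) (bs j) = 0) ->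
  (forall i, pA (bs i) (bs i) != 0) -> orthfam (fun i => e (bs i)).
Proof.
move=> [_ _ _ ep _] o d; split => [i j ij|i]; first by rewrite ep o.
apply/eqP => h; move: (d i); rewrite -ep polxx h mulr0 eqxx //.
Qed.

Lemma level_surj (A : lmodType k) mA cA pA (oA : A) e m (bs : 'I_m -> A) :
  level mA cA pA oA e -> (forall i j, i != j -> pA (bs i) (bs j) = 0) ->
  (forall i, pA (bs i) (bs i) != 0) -> (n <= m)%N -> forall z, exists p, z = e p.
Proof.
move=> L o d nm z.
have oF := level_orth L o d.
have [c ->] := span nm (orth_indep oF) z.
exists (\sum_i c i *: bs i); case: L => el _ _ _ _.
rewrite (lin_sum _ el); apply: eq_bigr => i _; by rewrite (linZ el).
Qed.

Lemma level_orth_a (A : lmodType k) mA cA pA (oA : A) e a :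
  level mA cA pA oA e -> (forall p, B (e p) a = 0) ->
  forall p q, B (e p ** a) (e q) = 0.
Proof. by move=> [el em ec ep eo] Ha p q; rewrite adj1 -ec -em polarC Ha. Qed.

Lemma Nconj x : N (conj x) = N x.
Proof.
by apply: (mulfI h2); rewrite -!polxx pol_conj conjK.
Qed.

Lemma one_neq0 : one != 0.
Proof. by apply/eqP => h; move: None; rewrite h N0 => /eqP; rewrite eq_sym oner_eq0. Qed.

Lemma E2_bas v a (i : 'I_4) : E2 v a (bas2 i) = nth 0 [:: one; v; a; v ** a] i.
Proof.
rewrite E2E; case: i => [[|[|[|[|i]]]] Hi] //=; rewrite !scale0r ?scale1r ?addr0 ?add0r //.
Qed.

Lemma E1_bas v (i : 'I_2) : E1 v (bas1 i) = nth 0 [:: one; v] i.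
Proof.
rewrite E1E; case: i => [[|[|i]] Hi] //=; rewrite !scale0r ?scale1r ?addr0 ?add0r //.
Qed.

Lemma frame_of v a b : T v = 0 -> T a = 0 -> B v a = 0 ->
  (forall i, B (E2 v a (bas2 i)) b = 0) -> frame v a b.
Proof.
move=> Tv Ta Bva H; split => //; split.
- by have := H (@Ordinal 4 0 isT); rewrite E2_bas /= polarC.
- by have := H (@Ordinal 4 1 isT); rewrite E2_bas.
- by have := H (@Ordinal 4 2 isT); rewrite E2_bas.
- by have := H (@Ordinal 4 3 isT); rewrite E2_bas.
Qed.

Lemma frame_E2 v a b : frame v a b -> forall p, B (E2 v a p) b = 0.
Proof.
move=> [Tv Ta Bva [Tb Bvb Bab Bvab]] p.
by rewrite E2E !polDl !polZl polarC -/(T b) Tb Bvb Bab Bvab; ring.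
Qed.

Lemma frame_surj v a b : frame v a b -> N v != 0 -> N a != 0 -> N b != 0 ->
  (n <= 8)%N -> forall z, exists P, z = E3 v a b P.
Proof.
move=> fr nv na nb n8; apply: (level_surj (level3 fr) (@P3_bas k _ _ _)) => // i.
by rewrite P3_basd mulf_neq0 // d3_neq0.
Qed.

Lemma frame_inj v a b : frame v a b -> N v != 0 -> N a != 0 -> N b != 0 ->
  injective (E3 v a b).
Proof.
move=> fr nv na nb P Q E; apply/eqP; rewrite -subr_eq0; apply/eqP.
apply: (E3_inj0 fr) => //; have [el _ _ _ _] := level3 fr.
by rewrite (linB el) E subrr.
Qed.

Definition isotrop := exists x, x != 0 /\ N x = 0.

Lemma extend_frame v a : isotrop -> (4 < n)%N -> (n <= 8)%N ->
  T v = 0 -> T a = 0 -> B v a = 0 -> N v != 0 -> N a != 0 ->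
  exists b, frame v a b /\ N b = -1.
Proof.
move=> [z0 [z0n Nz0]] n4 n8 Tv Ta Bva nv na.
have L2 := level2 Tv Ta Bva.
have oF := level_orth L2 (@P2_bas k _ _) (fun i => P2_basd i h2 nv na).
have [b0 [Hb0 nb0]] := D1 n4 oF.
have fr0 : frame v a b0.
  by apply: frame_of.
have [el em ec ep eo] := L2.
have orth := level_orth_a L2 (frame_E2 fr0).
suff [Q HQ] : exists Q, N (E2 v a Q) * N b0 = -1.
  exists (E2 v a Q ** b0); split; last by rewrite Nmul.
  by apply: frame_of => // i; rewrite polarC orth.
have [[P1 P2] Ez0] := frame_surj fr0 nv na nb0 n8 z0.
rewrite /E3 /cde /= in Ez0.
set x := E2 v a P1 in Ez0; set y := E2 v a P2 in Ez0.
have NE : N x + N y * N b0 = 0.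
  by rewrite -Nz0 Ez0 ND Nmul polarC orth addr0.
have [ny0|ny] := eqVneq (N y) 0.
  have nx0 : N x = 0 by move: NE; rewrite ny0 mul0r addr0.
  have [R [Rn NR]] : exists R, E2 v a R != 0 /\ N (E2 v a R) = 0.
    have [x0|xn] := eqVneq x 0; last by exists P1.
    exists P2; split => //; apply/eqP => y0; move/eqP: z0n; apply.
    by rewrite Ez0 x0 /y y0 mul0x addr0.
  have [u Bu] : exists u, B (E2 v a R) u != 0.
    apply: NNPP => H; move/eqP: Rn; apply; apply: ndeg => u.
    by apply/eqP; apply: NNPP => H2; apply: H; exists u; apply/negP.
  have [[S1 S2] Eu] := frame_surj fr0 nv na nb0 n8 u.
  rewrite /E3 /cde /= in Eu.
  move: Bu; rewrite Eu polDr (polarC _ (_ ** b0)) orth addr0 => Bu.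
  set bt := B (E2 v a R) (E2 v a S1) in Bu.
  pose t := - (N b0)^-1.
  pose l := (t - N (E2 v a S1)) / bt.
  exists (l *: R + S1); rewrite el ND NZ NR mulr0 add0r polZl -/bt.
  rewrite /l /t; field; rewrite Bu; exact: nb0.
pose Q := (N x)^-1 *: M2 (N v) (N a) P2 (C2 P1).
have nx : N x != 0.
  have -> : N x = - (N y * N b0) by apply/eqP; rewrite -addr_eq0 NE.
  by rewrite oppr_eq0 mulf_neq0.
exists Q; rewrite /Q (linZ el) em ec NZ Nmul Nconj -/x -/y.
have e : N y * N b0 = - N x by apply/eqP; rewrite -addr_eq0 addrC NE.
transitivity ((N x)^-1 ^+ 2 * N x * (N y * N b0)); first by ring.
by rewrite e; field.
Qed.

Lemma frame_exists v : isotrop -> n = 8 -> T v = 0 -> N v != 0 ->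
  exists a b, [/\ frame v a b, N a = -1 & N b = -1].
Proof.
move=> iso n8 Tv nv.
have oF := level_orth (level1 Tv) (@P1_bas k _) (fun i => P1_basd i h2 nv).
have n2' : (2 < n)%N by rewrite n8.
have [a0 [Ha0 na0]] := D1 n2' oF.
have Ta0 : T a0 = 0 by have := Ha0 (@Ordinal 2 0 isT); rewrite E1_bas /= polarC.
have Bva0 : B v a0 = 0 by have := Ha0 (@Ordinal 2 1 isT); rewrite E1_bas.
have n4 : (4 < n)%N by rewrite n8.
have n8' : (n <= 8)%N by rewrite n8.
have nm1 : (-1 : k) != 0 by rewrite oppr_eq0 oner_eq0.
have [b1 [[_ _ _ [Tb1 Bvb1 _ _]] Nb1]] := extend_frame iso n4 n8' Tv Ta0 Bva0 nv na0.
have [b [fr Nb]] := extend_frame iso n4 n8' Tv Tb1 Bvb1 nv ltac:(by rewrite Nb1).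
by exists b1, b.
Qed.

Lemma E3v v a b : E3 v a b (((0, 1), (0, 0)), ((0, 0), (0, 0))) = v.
Proof.
rewrite /E3 /cde /= !E2E /= !scale0r ?scale1r !addr0 !add0r mul0x addr0 //.
Qed.

Lemma frame_iso v a b v' a' b' : frame v a b -> frame v' a' b' ->
  N v != 0 -> N a != 0 -> N b != 0 -> N v' = N v -> N a' = N a -> N b' = N b ->
  (n <= 8)%N -> exists phi, is_alg_aut mul one phi /\ phi v = v'.
Proof.
move=> fr fr' nv na nb ev ea eb n8.
have [el em ec ep eo] := level3 fr.
have [el' em' ec' ep' eo'] := level3 fr'.
have hs := frame_surj fr nv na nb n8.
have hs' := frame_surj fr' ltac:(by rewrite ev) ltac:(by rewrite ea) ltac:(by rewrite eb) n8.
have hi := frame_inj fr nv na nb.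
have hi' := frame_inj fr' ltac:(by rewrite ev) ltac:(by rewrite ea) ltac:(by rewrite eb).
pose g z := proj1_sig (constructive_indefinite_description _ (hs z)).
have gE z : z = E3 v a b (g z) := proj2_sig (constructive_indefinite_description _ (hs z)).
pose g' z := proj1_sig (constructive_indefinite_description _ (hs' z)).
have gE' z : z = E3 v' a' b' (g' z) := proj2_sig (constructive_indefinite_description _ (hs' z)).
have gK P : g (E3 v a b P) = P by apply: hi; rewrite -gE.
have gK' P : g' (E3 v' a' b' P) = P by apply: hi'; rewrite -gE'.
exists (fun z => E3 v' a' b' (g z)); split; last first.
  by rewrite -{1}(E3v v a b) gK E3v.
split.
- move=> r x y /=.
  have -> : g (r *: x + y) = r *: g x + g y by apply: hi; rewrite -gE el -!gE.
  by rewrite el'.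
- exists (fun z => E3 v a b (g' z)) => z /=; first by rewrite gK' -gE.
  by rewrite gK -gE'.
- by rewrite -eo gK eo'.
- move=> x y /=.
  by rewrite {1}(gE x) {1}(gE y) -em gK -ev -ea -eb em'.
Qed.

Lemma aut_N phi : is_alg_aut mul one phi -> forall x, N (phi x) = N x.
Proof.
move=> [pl [psi pK _] p1 pm] x.
have pl' : lin phi by move=> r y z; exact: pl.
have pinj : injective phi := can_inj pK.
have e1 := pm x x; rewrite !sqr (linB pl') !(linZ pl') p1 in e1.
have e2 : (T (phi x) - T x) *: phi x = (N (phi x) - N x) *: one.
  apply: (use_eq (esym e1)); apply/rowP => i; rewrite !mxE; ring.
have [eT|nT] := eqVneq (T (phi x)) (T x).
  move: e2; rewrite eT subrr scale0r => /esym/eqP; rewrite scaler_eq0 (negbTE one_neq0) orbF.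
  by rewrite subr_eq0 => /eqP.
pose mu := (N (phi x) - N x) / (T (phi x) - T x).
have ephi : phi x = mu *: one.
  by rewrite /mu mulrC -scalerA -e2 scalerA mulVf ?scale1r // subr_eq0.
have ex : x = mu *: one by apply: pinj; rewrite ephi (linZ pl') p1.
by rewrite ephi [in RHS]ex !NZ None.
Qed.

Lemma comp2_basis : (1 < n)%N -> (n <= 2)%N ->
  exists u, [/\ T u = 0, N u != 0, (forall z, exists p, z = E1 u p) & injective (E1 u)].
Proof.
move=> n1 n2.
have oF : orthfam (fun _ : 'I_1 => one).
  by split => [i j|i]; rewrite ?None ?oner_eq0 // !ord1 eqxx.
have [u [Hu nu]] := D1 n1 oF.
have Tu : T u = 0 by rewrite /T polarC (Hu ord0).
exists u; split => //.
  apply: (level_surj (level1 Tu) (@P1_bas k _)) => // i.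
  exact: P1_basd.
move=> [p1 p2] [q1 q2]; rewrite !E1E /= => h.
have h1 := congr1 (fun z => B z one) h; have h3 := congr1 (fun z => B z u) h.
rewrite /= !polDl !polZl polxx None -/(T u) Tu in h1.
rewrite /= !polDl !polZl polxx polarC -/(T u) Tu in h3.
have e1 : p1 = q1.
  by apply: (mulfI h2); move: h1; rewrite !mulr0 !addr0 !mulr1 mulrC [q1 * _]mulrC.
have e2 : p2 = q2.
  apply: (mulfI (mulf_neq0 h2 nu)); move: h3; rewrite e1 !mulr0 !add0r.
  by rewrite !(mulrC _ (2 * N u)).
by rewrite e1 e2.
Qed.

Lemma exists_perp1 : (1 < n)%N -> exists u, T u = 0 /\ N u != 0.
Proof.
move=> n1.
have oF : orthfam (fun _ : 'I_1 => one).
  by split => [i j|i]; rewrite ?None ?oner_eq0 // !ord1 eqxx.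
have [u [Hu nu]] := D1 n1 oF.
by exists u; rewrite /T polarC (Hu ord0).
Qed.

Lemma norm_univ v a b : frame v a b -> N a = -1 -> N b = -1 ->
  forall c, exists w, T w = 0 /\ N w = c.
Proof.
move=> [Tv Ta Bva [Tb Bvb Bab Bvab]] Na Nb c.
have Tab : T (a ** b) = 0.
  by rewrite /T adj1 mulx1 conjT0 // polNr polarC Bab oppr0.
have Bbab : B b (a ** b) = 0.
  by rewrite -{1}(mul1x b) pol_mulxxr polarC -/(T a) Ta mul0r.
exists (((c - 1) / 2) *: b + ((c + 1) / 2) *: (a ** b)); split.
  by rewrite /T polDl !polZl -!/(T _) Tb Tab !mulr0 addr0.
rewrite ND !NZ Nmul Na Nb polZl polZr Bbab; field; exact: h2.
Qed.

End Comp.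

Section Two.
Variable k : fieldType.
Hypothesis h2 : (2:k) != 0.

Lemma scaleoE (a : k) (b : k^o) : a *: b = a * b. Proof. by []. Qed.

Definition o1 : 'I_2 := @Ordinal 2 1 isT.
Definition vec2 (p : k^o * k^o) : 'rV[k]_2 := \row_(i < 2) (if i == ord0 then p.1 else p.2).
Definition unv (x : 'rV[k]_2) : k^o * k^o := (x 0 ord0, x 0 o1).

Lemma I2 (i : 'I_2) : i = ord0 \/ i = o1.
Proof. by case: i => [[|[|i]] Hi] //; [left|right]; apply: val_inj. Qed.

Lemma eq2 (x y : 'rV[k]_2) : x 0 ord0 = y 0 ord0 -> x 0 o1 = y 0 o1 -> x = y.
Proof. by move=> h0 h1; apply/rowP => i; case: (I2 i) => ->. Qed.

Lemma vec2E0 p : vec2 p 0 ord0 = p.1. Proof. by rewrite mxE. Qed.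
Lemma vec2E1 p : vec2 p 0 o1 = p.2. Proof. by rewrite mxE. Qed.
Lemma unvK p : unv (vec2 p) = p. Proof. by case: p => a b; rewrite /unv vec2E0 vec2E1. Qed.
Lemma vec2K x : vec2 (unv x) = x. Proof. by apply: eq2; rewrite ?vec2E0 ?vec2E1. Qed.

Definition Fc (c : k) : alg2 k :=
  Alg2 (fun x y => vec2 (M1 c (unv x) (unv y))) (vec2 (1, 0))
       (fun x => x 0 ord0 ^+ 2 + c * x 0 o1 ^+ 2).

Ltac t2 := apply: eq2; rewrite /unv /M1 /cdm /mA0 /cA0 /= !(vec2E0, vec2E1, mxE) /= ?scaleoE; ring.

Lemma Fc_comp c : c != 0 -> is_comp_alg2 (Fc c).
Proof.
move=> cn; rewrite /is_comp_alg2 /=; split.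
- by split => a x y z; t2.
- by move=> x; split; t2.
- split => [a x|a x y z]; rewrite /polar /= !mxE; ring.
- move=> x H; apply: eq2; rewrite mxE.
    have := H (vec2 (1, 0)); rewrite /polar /= !(vec2E0, vec2E1, mxE) /= => h.
    apply: (mulfI h2); rewrite mulr0 -h; ring.
  have := H (vec2 (0, 1)); rewrite /polar /= !(vec2E0, vec2E1, mxE) /= => h.
  apply: (mulfI (mulf_neq0 h2 cn)); rewrite mulr0 -h; ring.
- move=> x y /=; rewrite !(vec2E0, vec2E1) /M1 /cdm /mA0 /cA0 /= ?scaleoE; ring.
Qed.

Lemma iso_trans (A1 A2 A3 : alg2 k) : alg2_iso A1 A2 -> alg2_iso A2 A3 -> alg2_iso A1 A3.
Proof.
move=> [f [fl fb f1 fm]] [g [gl gb g1 gm]]; exists (g \o f); split => /=.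
- by move=> r x y /=; rewrite fl gl.
- exact: bij_comp.
- by rewrite /= f1 g1.
- by move=> x y /=; rewrite fm gm.
Qed.

Lemma Fc_scale (c c' t : k) : t != 0 -> c = t ^+ 2 * c' -> alg2_iso (Fc c) (Fc c').
Proof.
move=> tn ec; subst c; exists (fun x => vec2 (x 0 ord0, t * x 0 o1)); split => /=.
- move=> r x y; apply: eq2; rewrite !(vec2E0, vec2E1, mxE) /= ?scaleoE; ring.
- apply: (@Bijective _ _ _ (fun x : 'rV[k]_2 => vec2 (x 0 ord0, t^-1 * x 0 o1))) => x; apply: eq2;
    rewrite !(vec2E0, vec2E1) //= mulrA ?mulVf ?mulfV ?mul1r //.
- by apply: eq2; rewrite !(vec2E0, vec2E1) //= mulr0.
- move=> x y; apply: eq2; rewrite /unv /M1 /cdm /mA0 /cA0 /= !(vec2E0, vec2E1) /= ?scaleoE; ring.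
Qed.

Lemma Fc_class (c c' : k) : c != 0 -> alg2_iso (Fc c) (Fc c') -> exists t, t != 0 /\ c = t ^+ 2 * c'.
Proof.
move=> cn [f [fl fb f1 fm]].
have fl' : lin f by move=> r x y; exact: fl.
have finj : injective f := bij_inj fb.
set e1 : 'rV[k]_2 := vec2 (0, 1).
have ee : (Fc c).(a2_mul) e1 e1 = (- c) *: vec2 (1, 0).
  apply: eq2; rewrite /= /unv /M1 /cdm /mA0 /cA0 /= !(vec2E0, vec2E1, mxE) /= ?scaleoE; ring.
have := fm e1 e1; rewrite ee (linZ fl') f1 /=.
set p := unv (f e1) => h.
have h0 := congr1 (fun x : 'rV[k]_2 => x 0 ord0) h; have h1 := congr1 (fun x : 'rV[k]_2 => x 0 o1) h.
rewrite /= !(vec2E0, vec2E1, mxE) /M1 /cdm /mA0 /cA0 /= ?scaleoE in h0 h1.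
move: h0 h1; rewrite /p /unv /=; set a := f e1 0 ord0; set b := f e1 0 o1 => h0 h1.
have [b0|bn] := eqVneq b 0.
  exfalso.
  have : f e1 = f (a *: vec2 (1, 0)).
    rewrite (linZ fl') f1 /=.
    by apply: eq2; rewrite !(vec2E0, vec2E1, mxE) /= -/a -/b ?b0 ?mulr1 ?mulr0.
  move/finj/(congr1 (fun x : 'rV[k]_2 => x 0 o1)); rewrite !(vec2E0, vec2E1, mxE) /= mulr0.
  by move/eqP; rewrite oner_eq0.
have a0 : a = 0.
  have : (2 * b) * a = 0 by rewrite mulr0 in h1; rewrite h1; ring.
  by move/eqP; rewrite mulf_eq0 (negbTE (mulf_neq0 h2 bn)) /= => /eqP.
exists b; split => //.
apply: oppr_inj; rewrite -[LHS]mulr1 h0 a0; ring.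
Qed.

Lemma vec2_lin : lin vec2.
Proof.
move=> r [p1 p2] [q1 q2]; apply: eq2; rewrite !(vec2E0, vec2E1, mxE) /=; by rewrite ?scaleoE.
Qed.

Lemma comp2_iso (A : alg2 k) : is_comp_alg2 A -> exists c : k, c != 0 /\ alg2_iso A (Fc c).
Proof.
move=> hA.
have [u [Tu nu surj inj]] := comp2_basis h2 (isT : (0 < 2)%N) hA (isT : (1 < 2)%N) (leqnn 2).
have [el em ec ep eo] := level1 h2 (isT : (0 < 2)%N) hA Tu.
pose g z := proj1_sig (constructive_indefinite_description _ (surj z)).
have gE z : z = E1 (a2_mul A) (a2_one A) u (g z) :=
  proj2_sig (constructive_indefinite_description _ (surj z)).
have gK P : g (E1 (a2_mul A) (a2_one A) u P) = P by apply: inj; rewrite -gE.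
exists (a2_N A u); split => //.
exists (fun z => vec2 (g z)); split.
- move=> r x y /=.
  have -> : g (r *: x + y) = r *: g x + g y by apply: inj; rewrite -gE el -!gE.
  by rewrite vec2_lin.
- apply: (@Bijective _ _ _ (fun x : 'rV[k]_2 => E1 (a2_mul A) (a2_one A) u (unv x))) => z.
    by rewrite unvK -gE.
  by rewrite gK vec2K.
- by rewrite /= -eo gK.
- move=> x y /=; rewrite unvK unvK.
  by rewrite {1}(gE x) {1}(gE y) -em gK.
Qed.

End Two.

End Helpers.
Import Helpers.

Theorem theorem5p10 (k : fieldType) (hk : 2 \notin [pchar k])
    (mul : 'rV[k]_8 -> 'rV[k]_8 -> 'rV[k]_8) (one : 'rV[k]_8)
    (N : 'rV[k]_8 -> k)
    (hC : is_split_octonion_algebra mul one N) :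
  (* v |-> N(v) k^x2 is constant on orbits of V_C^ss(k) ... *)
  [/\ (forall v w, in_VCss one N v -> in_VCss one N w ->
         same_orbit mul one v w -> same_sq_class (N v) (N w)),
      (* ... the induced map on orbits is injective ... *)
      (forall v w, in_VCss one N v -> in_VCss one N w ->
         same_sq_class (N v) (N w) -> same_orbit mul one v w),
      (* ... and surjective onto k^x / k^x2 ... *)
      (forall c : k, c != 0 -> exists v, in_VCss one N v /\ same_sq_class (N v) c)
    & (* hence: orbits are in bijection with iso. classes of 2-dim composition algebras *)
      exists F : 'rV[k]_8 -> alg2 k,
        [/\ forall v, in_VCss one N v -> is_comp_alg2 (F v),
            forall v w, in_VCss one N v -> in_VCss one N w ->
              (same_orbit mul one v w <-> alg2_iso (F v) (F w))
          & forall A : alg2 k, is_comp_alg2 A ->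
              exists v, in_VCss one N v /\ alg2_iso A (F v)]].
Proof.
have h2 : (2:k) != 0 by apply: contra hk => h; rewrite inE /=.
have hn : (0 < 8)%N by [].
case: hC => hC8 iso.
have TE v : in_VC one N v -> T one N v = 0 by rewrite /in_VC /T polarC.
have P1 : forall v w, same_orbit mul one v w -> same_sq_class (N v) (N w).
  move=> v w [phi [a [aut an ->]]]; exists a^-1; split; first by rewrite invr_eq0.
  by rewrite (NZ hC8) (aut_N h2 hn hC8 aut); field.
have P2 : forall v w, in_VCss one N v -> in_VCss one N w ->
         same_sq_class (N v) (N w) -> same_orbit mul one v w.
  move=> v w [vc nv] [wc nw] [t [tn et]].
  have Tw' : T one N (t *: w) = 0 by rewrite /T (polZl hC8) -/(T one N w) TE ?mulr0.
  have Nw' : N (t *: w) = N v by rewrite (NZ hC8) et.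
  have nm1 : (-1 : k) != 0 by rewrite oppr_eq0 oner_eq0.
  have [a [b [fr Na Nb]]] := frame_exists h2 hn hC8 iso (erefl 8) (TE v vc) nv.
  have [a' [b' [fr' Na' Nb']]] := frame_exists h2 hn hC8 iso (erefl 8) Tw' (ltac:(by rewrite Nw')).
  have [phi [aut phv]] := frame_iso h2 hn hC8 fr fr' nv ltac:(by rewrite Na) ltac:(by rewrite Nb)
     Nw' ltac:(by rewrite Na Na') ltac:(by rewrite Nb Nb') (leqnn 8).
  exists phi, t^-1; split => //; first by rewrite invr_eq0.
  by rewrite phv scalerA mulVf ?scale1r.
have P3 : forall c : k, c != 0 -> exists v, in_VCss one N v /\ same_sq_class (N v) c.
  move=> c cn.
  have [u [Tu nu]] := exists_perp1 h2 hn hC8 (isT : (1 < 8)%N).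
  have [a [b [fr Na Nb]]] := frame_exists h2 hn hC8 iso (erefl 8) Tu nu.
  have [w [Tw Nw]] := norm_univ h2 hC8 fr Na Nb c.
  exists w; split.
    by split; [rewrite /in_VC polarC | rewrite Nw].
  by exists 1; split; rewrite ?oner_eq0 // expr1n mul1r.
split; [by move=> v w _ _; exact: P1 | exact: P2 | exact: P3 | ].
exists (fun v => Fc (N v)); split.
- by move=> v [_ nv]; exact: Fc_comp.
- move=> v w hv hw; split.
    by move/P1 => [t [tn et]]; exact: (Fc_scale tn et).
  move/(Fc_class h2 hv.2) => [t [tn et]]; apply: P2 => //.
  by exists t.
- move=> A hA.
  have [c [cn isoA]] := comp2_iso h2 hA.
  have [v [hv [t [tn et]]]] := P3 c cn.
  exists v; split => //; apply: (iso_trans isoA).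
  apply: (Fc_scale (t := t^-1)); first by rewrite invr_eq0.
  by rewrite et mulrA -exprMn mulVf ?expr1n ?mul1r.
Qed.
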